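(* Let $n,k$ be positive integers with $n\geq k$ and $n\geq 3(n-k)$, and let $i\in\{0,1,\dots,n-k\}$. Then for every $C\in\mathcal{K}_k(n)$, the diagram $\alpha_{n,k,i}(C)$ lies in $\mathcal{K}_{k+1}(n+1)$.
   Context: A linear chord diagram of size $n$ is a partition of $\{1,2,\dots,2n\}$ into blocks of size two, called chords. For a chord $c=\{s_c,e_c\}$ with $s_c<e_c$, $s_c$ is its start point, $e_c$ its end point, and its length is $e_c-s_c$. $\mathcal{K}_k(n)$ is the set of all linear chord diagrams of size $n$ in which every chord has length at least $k$. Let $M_{n,k}=\{k+1,\dots,2n-k\}$, and for a diagram $C$ of size $n$ let $S_C$ be the set of chords of $C$ with neither endpoint in $M_{n,k}$. The map $\alpha_{n,k,i}$ is defined on $C\in\mathcal{K}_k(n)$ as follows. Insert a new chord $c$ whose start point is placed immediately before $M_{n,k}$ (between positions $k$ and $k+1$) and whose end point is placed immediately after $M_{n,k}$ (between positions $2n-k$ and $2n-k+1$), keeping the relative order of all original points, and relabel the points $1,\dots,2n+2$; so $c=\{k+1,2n-k+2\}$. Then repeatedly swap the start point of $c$ with the nearest start point to its left belonging to a chord of $S_C$ (i.e., the two chords exchange these start positions), stopping when exactly $i$ start points of chords of $S_C$ lie to the left of the start point of $c$. The resulting diagram of size $n+1$ is $\alpha_{n,k,i}(C)$. (Under the hypotheses, $|S_C|\ge n-k$, so this is well defined.) *)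

(* Defs.v *)
From mathcomp Require Import all_boot.
Set Implicit Arguments. Unset Strict Implicit. Unset Printing Implicit Defensive.

(* A linear chord diagram of size n is represented as a double-occurrence
   word w : seq nat of length 2n: position p (1-based) of {1..2n} is the
   list index p-1, and the chord containing it is named by the label w_(p-1).
   Two positions form a chord iff they carry the same label; every label
   occurring in w occurs exactly twice.  (Labels are mere names: the
   partition of {1..2n} is the set of label classes.) *)
Definition is_diagram (n : nat) (w : seq nat) : Prop :=
  size w = 2 * n /\ forall x, x \in w -> count_mem x w = 2.

Definition min_len (k : nat) (w : seq nat) : Prop :=
  forall i j, i < j -> j < size w -> nth 0 w i = nth 0 w j -> k <= j - i.

Definition inK (k n : nat) (w : seq nat) : Prop := is_diagram n w /\ min_len k w.

Definition fresh (w : seq nat) : nat := (foldr maxn 0 w).+1.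

(* M_{n,k} = {k+1,...,2n-k} (1-based) = indices k <= j < 2n-k (0-based). *)
Definition inM (n k j : nat) : bool := (k <= j) && (j < 2 * n - k).

Definition inS (n k : nat) (w : seq nat) (a : nat) : bool :=
  (a \in w) && all (fun j => (nth 0 w j != a) || ~~ inM n k j) (iota 0 (size w)).

(* Insertion of the chord c: start point between positions k and k+1,
   end point between positions 2n-k and 2n-k+1; c = {k+1, 2n-k+2}. *)
Definition insert_c (n k : nat) (w : seq nat) : seq nat :=
  let c := fresh w in
  take k w ++ [:: c] ++ take (2 * n - 2 * k) (drop k w) ++ [:: c]
    ++ drop (2 * n - k) w.

Definition is_start (v : seq nat) (j : nat) : bool := index (nth 0 v j) v == j.

Definition swap_pos (v : seq nat) (a b : nat) : seq nat :=
  set_nth 0 (set_nth 0 v a (nth 0 v b)) b (nth 0 v a).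

Section Alpha.
Variables (n k i : nat) (w : seq nat).

Let c := fresh w.
Let SC (v : seq nat) (j : nat) : bool := is_start v j && inS n k w (nth 0 v j).

Definition SC_left (v : seq nat) : seq nat :=
  filter (SC v) (iota 0 (index c v)).

Definition alpha_step (v : seq nat) : seq nat :=
  if i < size (SC_left v) then swap_pos v (index c v) (last 0 (SC_left v))
  else v.

(* repeat (with ample fuel: each swap strictly decreases the count) *)
Definition alpha : seq nat :=
  let v0 := insert_c n k w in iter (size v0) alpha_step v0.
End Alpha.

(* Main.v *)
Require Import Defs.
From mathcomp Require Import all_boot zify.

Lemma index_eq (s : seq nat) x j : j < size s -> nth 0 s j = x ->
  (forall t, t < j -> nth 0 s t != x) -> index x s = j.
Proof.
elim: s j => [|y s IH] [|j] //= Hj Hx Ht.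
- by rewrite Hx eqxx.
- have := Ht 0 isT; rewrite /= eq_sym => /negbTE ->; congr S.
  apply: IH => // t Htj; exact: (Ht t.+1).
Qed.

Lemma count_nth (s : seq nat) x :
  count_mem x s = count (fun j => nth 0 s j == x) (iota 0 (size s)).
Proof. by rewrite -{1}(mkseq_nth 0 s) /mkseq count_map. Qed.

Lemma count3 (s : seq nat) x i j l : i != j -> j != l -> i != l ->
  i < size s -> j < size s -> l < size s ->
  nth 0 s i = x -> nth 0 s j = x -> nth 0 s l = x -> 3 <= count_mem x s.
Proof.
move=> ij jl il Hi Hj Hl Ei Ej El; rewrite count_nth -size_filter.
have -> : 3 = size [:: i; j; l] by [].
apply: uniq_leq_size; first by rewrite /= !inE negb_or ij il jl.
move=> y; rewrite !inE mem_filter mem_iota /= => /or3P [] /eqP ->.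
- by rewrite Ei eqxx Hi.
- by rewrite Ej eqxx Hj.
- by rewrite El eqxx Hl.
Qed.

Lemma count_uniq2 (s : seq nat) x i j l : count_mem x s = 2 -> i != j ->
  i < size s -> j < size s -> l < size s ->
  nth 0 s i = x -> nth 0 s j = x -> nth 0 s l = x -> l = i \/ l = j.
Proof.
move=> C ij Hi Hj Hl Ei Ej El.
case: (eqVneq l i) => [->|li]; first by left.
case: (eqVneq l j) => [->|lj]; first by right.
have jl' : j != l by rewrite eq_sym.
have il' : i != l by rewrite eq_sym.
by have := @count3 s x i j l ij jl' il' Hi Hj Hl Ei Ej El; rewrite C.
Qed.

Lemma count_other (s : seq nat) x i : count_mem x s = 2 -> i < size s ->
  nth 0 s i = x -> exists j, [/\ j < size s, j != i & nth 0 s j = x].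
Proof.
move=> C Hi Ei.
case: (boolP (has (fun j => (j != i) && (nth 0 s j == x)) (iota 0 (size s)))).
  move/hasP => [j]; rewrite mem_iota /= => Hj /andP [ji /eqP Ej].
  by exists j.
move/hasPn => H; exfalso.
have : size (filter (fun j => nth 0 s j == x) (iota 0 (size s))) <= size [:: i].
  apply: uniq_leq_size; first exact/filter_uniq/iota_uniq.
  move=> y; rewrite mem_filter => /andP [Ey Hy]; rewrite inE.
  apply/negPn/negP => yi; have := H y Hy; by rewrite yi Ey.
by rewrite size_filter -count_nth C.
Qed.

Lemma sum_count (U s : seq nat) (P : pred nat) : uniq U -> {subset s <= U} ->
  \sum_(y <- U) count_mem y s * P y = count P s.
Proof.
move=> uU; elim: s => [|x s IH] sub /=.
  by rewrite big1 // => y _.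
under eq_bigr => y _ do rewrite mulnDl.
rewrite big_split /= IH; last by move=> y ys; apply: sub; rewrite inE ys orbT.
congr (_ + _).
rewrite (bigD1_seq x) //=; last by apply: sub; rewrite inE eqxx.
rewrite eqxx mul1n big1 ?addn0 // => y yx.
by rewrite eq_sym (negbTE yx).
Qed.

Lemma map_nth_iota (s : seq nat) p : p <= size s ->
  map (nth 0 s) (iota 0 p) = take p s.
Proof.
move=> Hp; apply: (@eq_from_nth _ 0).
  by rewrite size_map size_iota size_take; case: ltngtP Hp => // ->.
move=> j; rewrite size_map size_iota => Hj.
by rewrite (nth_map 0) ?size_iota // nth_iota // nth_take.
Qed.

Lemma le_foldr_max (s : seq nat) x : x \in s -> x <= foldr maxn 0 s.
Proof.
elim: s => //= y s IH; rewrite inE => /orP [/eqP ->|/IH H].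
  exact: leq_maxl.
exact: leq_trans H (leq_maxr _ _).
Qed.
Section W.
Variables (n k : nat) (w : seq nat).
Hypotheses (Hk : 0 < k) (Hkn : k <= n) (H3 : 3 * (n - k) <= n) (Hw : inK k n w).

Let m := n - k.
Let c := fresh w.

Lemma sw : size w = 2 * n. Proof. by case: Hw => [[]]. Qed.
Lemma cw x : x \in w -> count_mem x w = 2. Proof. by case: Hw => [[_ H] _]; apply: H. Qed.
Lemma mlw : min_len k w. Proof. by case: Hw. Qed.

Lemma c_notin : c \notin w.
Proof. apply/negP => /le_foldr_max; by rewrite /c /fresh ltnn. Qed.

Lemma nthw_neq_c j : j < 2 * n -> nth 0 w j != c.
Proof.
move=> Hj; apply/negP => /eqP E; move: c_notin; rewrite -E mem_nth //.
by rewrite sw.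
Qed.

Lemma start_w j t : j < k -> t < j -> nth 0 w t != nth 0 w j.
Proof.
move=> Hj Ht; apply/negP => /eqP E.
have := @mlw t j Ht ltac:(rewrite sw; lia) E; lia.
Qed.

Lemma nonS_small j : j < k -> ~~ inS n k w (nth 0 w j) -> j < 2 * m.
Proof.
move=> Hj; rewrite /inS mem_nth ?sw /=; last by lia.
move/allPn => [q]; rewrite mem_iota /= negb_or !negbK /inM => Hq /andP [/eqP E /andP [H1 H2]].
have := @mlw j q ltac:(lia) ltac:(rewrite sw; lia) (esym E); rewrite /m; lia.
Qed.

Lemma S_end j : j < k -> inS n k w (nth 0 w j) ->
  exists e, [/\ 2 * n - k <= e, e < 2 * n, nth 0 w e = nth 0 w j & j + k <= e].
Proof.
move=> Hj HS.
have Hjn : j < size w by rewrite sw; lia.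
have [e [He ej Ee]] := @count_other w (nth 0 w j) j (@cw _ (mem_nth 0 Hjn)) Hjn (erefl _).
have je : j < e.
  case: (ltngtP j e) => // [ej'|]; last by move=> E; rewrite E eqxx in ej.
  have := @mlw e j ej' Hjn Ee; lia.
have := @mlw j e je He (esym Ee) => Hke.
move: HS; rewrite /inS => /andP [_ /allP /(_ e)]; rewrite mem_iota /= He.
move=> /(_ isT); rewrite -Ee eqxx /= /inM negb_and -!ltnNge => H.
exists e; split => //; try lia; rewrite -sw; done.
Qed.

Lemma size_mid : size (take (2*m) (drop k w)) = 2*m.
Proof. by rewrite size_takel // size_drop sw /m; lia. Qed.

Lemma nth_mid t : t < 2 * m -> nth 0 (take (2*m) (drop k w)) t = nth 0 w (k + t).
Proof. by move=> Ht; rewrite nth_take // nth_drop. Qed.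

Lemma inS_mid y : y \in w -> inS n k w y = (y \notin take (2*m) (drop k w)).
Proof.
move=> yw; rewrite /inS yw /=.
apply/idP/idP.
- move/allP => H; apply/negP => /(nthP 0) [t]; rewrite size_mid => Ht.
  rewrite nth_mid // => E.
  have := H (k+t); rewrite mem_iota sw /= E eqxx /inM /= => /(_ ltac:(rewrite /m in Ht; lia)).
  rewrite /m in Ht; apply/negP; rewrite negbK; apply/andP; split; lia.
- move/negP => Hn; apply/allP => j; rewrite mem_iota sw /= => Hj.
  apply/negP => /negP; rewrite negb_or !negbK => /andP [/eqP E Hm]; apply: Hn.
  move: Hm; rewrite /inM => /andP [H1 H2].
  apply/(nthP 0); exists (j - k); first by rewrite size_mid /m; lia.
  by rewrite nth_mid ?subnKC // /m; lia.
Qed.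

Lemma uniq_seg lo len : lo + len <= 2 * n -> len <= k -> uniq (take len (drop lo w)).
Proof.
move=> H1 H2; apply/(uniqP 0) => a b; rewrite !inE size_takel ?size_drop ?sw; last by lia.
move=> Ha Hb; rewrite !nth_take // !nth_drop => E.
case: (ltngtP a b) => // ab.
- have := @mlw (lo+a) (lo+b) ltac:(lia) ltac:(rewrite sw; lia) E; lia.
- have := @mlw (lo+b) (lo+a) ltac:(lia) ltac:(rewrite sw; lia) (esym E); lia.
Qed.

Lemma count_nonS : count (fun y => ~~ inS n k w y) (take k w) <= m.
Proof.
pose u := take k w; pose mid := take (2*m) (drop k w); pose z := drop (2 * n - k) w.
have Ew : w = u ++ mid ++ z.
  rewrite /u /mid /z -{1}(cat_take_drop k w) -{1}(cat_take_drop (2*m) (drop k w)).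
  by rewrite drop_drop; congr (_ ++ _ ++ drop _ _); rewrite /m; lia.
have Hu : uniq u by rewrite /u -(drop0 w); apply: uniq_seg; lia.
have Hm : uniq mid by apply: uniq_seg; rewrite /m; lia.
have Hz : uniq z.
  rewrite /z -(@take_oversize _ k (drop _ w)); last by rewrite size_drop sw; lia.
  apply: uniq_seg; lia.
have su : size u = k by rewrite /u size_takel // sw; lia.
have sz : size z = k by rewrite /z size_drop sw; lia.
have smid : size mid = 2 * m by apply: size_mid.
have Hc : count (fun y => ~~ inS n k w y) u = count (mem mid) u.
  apply: eq_in_count => y yu; rewrite inS_mid ?negbK //.
  by rewrite Ew mem_cat yu.
rewrite Hc.
have sub s : {subset s <= w} -> {subset s <= undup w}.
  by move=> H y ys; rewrite mem_undup H.
have sU : {subset u <= undup w} by apply: sub => y yu; rewrite Ew mem_cat yu.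
have sM : {subset mid <= undup w} by apply: sub => y yu; rewrite Ew !mem_cat yu orbT.
have sZ : {subset z <= undup w} by apply: sub => y yu; rewrite Ew !mem_cat yu !orbT.
have key : \sum_(y <- undup w) (count_mem y u * (mem mid) y + count_mem y u * (mem mid) y + count_mem y z * predT y)
   = \sum_(y <- undup w) (count_mem y u * predT y + count_mem y mid * predT y).
  apply: eq_big_seq => y; rewrite mem_undup => yw.
  have := @cw y yw; rewrite {1}Ew !count_cat !count_uniq_mem //=.
  by case: (y \in u); case: (y \in mid); case: (y \in z).
move: key; rewrite !big_split !sum_count ?undup_uniq //.
rewrite !count_predT su sz smid => /= H; lia.
Qed.

Let v0 := insert_c n k w.
Let q := 2 * n - k + 1.

Lemma Ew_dec : w = take k w ++ take (2 * n - 2 * k) (drop k w) ++ drop (2 * n - k) w.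
Proof.
rewrite -{1}(cat_take_drop k w) -{1}(cat_take_drop (2 * n - 2 * k) (drop k w)).
by rewrite drop_drop; congr (_ ++ _ ++ drop _ _); lia.
Qed.

Lemma v0E : v0 = take k w ++ c :: (take (2 * n - 2 * k) (drop k w) ++ c :: drop (2 * n - k) w).
Proof. by []. Qed.

Lemma size_tk : size (take k w) = k.
Proof. by rewrite size_takel // sw; lia. Qed.
Lemma size_tm : size (take (2 * n - 2 * k) (drop k w)) = 2 * n - 2 * k.
Proof. by rewrite size_takel // size_drop sw; lia. Qed.

Lemma size_v0 : size v0 = 2 * n + 2.
Proof. rewrite v0E size_cat /= size_cat /= size_tk size_tm size_drop sw; lia. Qed.

Lemma count_v0 x : count_mem x v0 = count_mem x w + 2 * (c == x).
Proof.
rewrite v0E [in RHS]Ew_dec !count_cat /= !count_cat /=; case: (c == x) => /=; lia.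
Qed.

Lemma v0_lt j : j < k -> nth 0 v0 j = nth 0 w j.
Proof. by move=> Hj; rewrite v0E nth_cat size_tk Hj nth_take. Qed.

Lemma v0_ge j : k <= j -> nth 0 v0 j = nth 0 (c :: (take (2 * n - 2 * k) (drop k w) ++ c :: drop (2 * n - k) w)) (j - k).
Proof. by move=> Hj; rewrite v0E nth_cat size_tk ltnNge Hj. Qed.

Lemma v0_k : nth 0 v0 k = c.
Proof. by rewrite v0_ge // subnn. Qed.

Lemma v0_mid j : k < j -> j < q -> nth 0 v0 j = nth 0 w (j - 1).
Proof.
move=> H1 H2; rewrite v0_ge ?(ltnW H1) //.
have -> : j - k = (j - k - 1).+1 by lia.
rewrite /= nth_cat size_tm ifT; last by rewrite /q in H2; lia.
by rewrite nth_take ?nth_drop; [congr nth; lia | rewrite /q in H2; lia].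
Qed.

Lemma v0_q : nth 0 v0 q = c.
Proof.
rewrite v0_ge; last by rewrite /q; lia.
have -> : q - k = (2 * n - 2 * k).+1 by rewrite /q; lia.
by rewrite /= nth_cat size_tm ltnn subnn.
Qed.

Lemma v0_gt j : q < j -> nth 0 v0 j = nth 0 w (j - 2).
Proof.
move=> H; rewrite v0_ge; last by rewrite /q in H; lia.
have -> : j - k = (j - k - 1).+1 by rewrite /q in H; lia.
rewrite /= nth_cat size_tm ifF; last by rewrite /q in H; lia.
have -> : j - k - 1 - (2 * n - 2 * k) = (j - 2 - (2 * n - k)).+1 by rewrite /q in H; lia.
by rewrite /= nth_drop; congr nth; rewrite /q in H; lia.
Qed.

Definition back j := if j < k then j else if j < q then j - 1 else j - 2.

Lemma v0_back j : j != k -> j != q -> nth 0 v0 j = nth 0 w (back j).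
Proof.
move=> /eqP jk /eqP jq; rewrite /back; case: (ltnP j k) => H1; first exact: v0_lt.
case: (ltnP j q) => H2; first by apply: v0_mid => //; lia.
by apply: v0_gt; lia.
Qed.

Record Inv (v : seq nat) : Prop := {
 Isize : size v = 2 * n + 2;
 Icount : forall x, count_mem x v = count_mem x v0;
 Iidx : index c v <= k;
 Ipre : forall j, j < index c v -> nth 0 v j = nth 0 w j;
 Iq : nth 0 v q = c;
 Isuf : forall j, q < j -> nth 0 v j = nth 0 v0 j;
 Iml : forall a b, a < b -> b < 2 * n + 2 -> nth 0 v a = nth 0 v b ->
        nth 0 v a != c -> k.+1 <= b - a }.
Arguments Isize {v}. Arguments Icount {v}. Arguments Iidx {v}. Arguments Ipre {v}.
Arguments Iq {v}. Arguments Isuf {v}. Arguments Iml {v}.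

Lemma idx_v0 : index c v0 = k.
Proof.
apply: index_eq; first by rewrite size_v0; lia.
  exact: v0_k.
move=> t Ht; rewrite v0_lt //; apply: nthw_neq_c; lia.
Qed.

Lemma Inv_v0 : Inv v0.
Proof.
split.
- exact: size_v0.
- by [].
- by rewrite idx_v0.
- by move=> j; rewrite idx_v0; apply: v0_lt.
- exact: v0_q.
- by [].
move=> a b ab Hb E Hc.
have ak : a != k by apply: contraNneq Hc => ->; rewrite v0_k.
have aq : a != q by apply: contraNneq Hc => ->; rewrite v0_q.
have bk : b != k by apply: contraNneq Hc => Eb; rewrite E Eb v0_k.
have bq : b != q by apply: contraNneq Hc => Eb; rewrite E Eb v0_q.
rewrite !v0_back // in E.
have H3' : 2 * (n - k) <= k by lia.
move: ak aq bk bq => /eqP ak /eqP aq /eqP bk /eqP bq.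
have Hl : back a < back b.
  rewrite /back /q in aq bq *; case: (ltnP a k) => ?; case: (ltnP a (2 * n - k + 1)) => ?;
  case: (ltnP b k) => ?; case: (ltnP b (2 * n - k + 1)) => ? /=; lia.
have Hs : back b < size w.
  rewrite sw /back /q in aq bq *; case: (ltnP b k) => ?; case: (ltnP b (2 * n - k + 1)) => ? /=; lia.
have := @mlw (back a) (back b) Hl Hs E.
rewrite /back /q in aq bq *; case: (ltnP a k) => ?; case: (ltnP a (2 * n - k + 1)) => ?;
  case: (ltnP b k) => ?; case: (ltnP b (2 * n - k + 1)) => ? /=; lia.
Qed.

Lemma c_in {v} : Inv v -> c \in v.
Proof.
move=> I; apply/negPn/negP => /count_memPn; rewrite (Icount I) count_v0 eqxx; lia.
Qed.

Lemma idx_size {v} : Inv v -> index c v < size v.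
Proof. by move=> I; rewrite index_mem c_in. Qed.

Lemma is_start_pre {v j} : Inv v -> j < index c v -> is_start v j.
Proof.
move=> I Hj; have Hs := idx_size I; have Hk' := Iidx I.
rewrite /is_start (Ipre I) //; apply/eqP; apply: index_eq.
- lia.
- exact: Ipre.
- move=> t Ht; rewrite (Ipre I); last lia.
  apply: start_w => //; lia.
Qed.

Lemma SC_size {v} : Inv v -> size (SC_left n k w v) = count (inS n k w) (take (index c v) w).
Proof.
move=> I; rewrite /SC_left /= size_filter -map_nth_iota; last by rewrite sw; have := Iidx I; lia.
rewrite count_map; apply: eq_in_count => j; rewrite mem_iota /= => Hj.
by rewrite is_start_pre // (Ipre I).
Qed.

Variable i : nat.

Lemma step_inv {v} : Inv v -> i < size (SC_left n k w v) ->
  Inv (alpha_step n k i w v) /\ index c (alpha_step n k i w v) < index c v.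
Proof.
move=> I Ha; rewrite /alpha_step /= Ha -/c.
set L := SC_left n k w v; set p := index c v.
have Lne : L != [::] by move: Ha; rewrite -/L; case: (L).
have pL : last 0 L \in L by move: Lne; case: (L) => // x L' _; exact: mem_last.
set p' := last 0 L.
have memL j : (j \in L) = (is_start v j && inS n k w (nth 0 v j)) && (j < p).
  by rewrite /L /SC_left /= mem_filter mem_iota.
move: (pL); rewrite memL -/p' => /andP [/andP [st HS] p'p].
have pk : p <= k := Iidx I.
have ps : p < 2 * n + 2 by rewrite -(Isize I); apply: idx_size.
have a_eq : nth 0 v p' = nth 0 w p' by apply: (Ipre I).
set a := nth 0 w p'.
have vp : nth 0 v p = c by apply: nth_index; apply: c_in.
have p'ne : p' != p by rewrite neq_ltn p'p.
set v' := swap_pos v p p'.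
have nthv' t : nth 0 v' t = if t == p' then c else if t == p then a else nth 0 v t.
  by rewrite /v' /swap_pos !nth_set_nth /= vp a_eq nth_set_nth.
have sv' : size v' = 2 * n + 2.
  rewrite /v' /swap_pos !size_set_nth (Isize I); lia.
rewrite a_eq in HS.
have [e [He1 He2 Ee He3]] := @S_end p' ltac:(lia) HS.
set r := e + 2.
have qr : q < r by rewrite /r /q; lia.
have vr : nth 0 v r = a by rewrite (Isuf I) // v0_gt // /r addnK.
have ac : a != c by apply: nthw_neq_c; lia.
have ca : count_mem a v = 2.
  rewrite (Icount I) count_v0 eq_sym (negbTE ac) muln0 addn0; apply: cw.
  by apply: mem_nth; rewrite sw; lia.
have key : k.+1 <= r - p.
  case: (eqVneq p p'.+1) => [Ep | Np]; first by rewrite /r; lia.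
  have nS : ~~ inS n k w (nth 0 w (p - 1)).
    apply/negP => HS'.
    have : p' = p - 1.
      rewrite /p' /L /SC_left /= -/c -/p.
      have -> : p = (p - 1) + 1 by lia.
      rewrite iotaD filter_cat /= add0n.
      have -> : p - 1 + 1 - 1 = p - 1 by lia.
      rewrite is_start_pre //; last by rewrite -/p; lia.
      rewrite (Ipre I) ?HS' /=; last by rewrite -/p; lia.
      by rewrite last_cat.
    lia.
  have := @nonS_small (p - 1) ltac:(lia) nS; rewrite /r /m; lia.
have oth t : t != p' -> t != p -> nth 0 v' t = nth 0 v t.
  by move=> H1 H2; rewrite nthv' (negbTE H1) (negbTE H2).
have idx' : index c v' = p'.
  apply: index_eq; [by rewrite sv'; lia | by rewrite nthv' eqxx |].
  move=> t Ht; rewrite oth; try (rewrite neq_ltn; apply/orP; left; lia).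
  rewrite (Ipre I); last by rewrite -/p; lia.
  apply: nthw_neq_c; lia.
have vp' : nth 0 v p' = a by [].
have p'r : p' != r by rewrite neq_ltn; apply/orP; left; rewrite /r; lia.
have sv : size v = 2 * n + 2 := Isize I.
split; last by rewrite idx'.
split.
- exact: sv'.
- move=> x; rewrite -(Icount I x) /v' /swap_pos !count_set_nth nth_set_nth /= (negbTE p'ne).
  rewrite size_set_nth sv vp a_eq -/a.
  have := Icount I c; rewrite count_v0 eqxx.
  have -> : maxn p.+1 (2 * n + 2) = 2 * n + 2 by lia.
  have -> : p < 2 * n + 2 by [].
  have -> : p' < 2 * n + 2 by lia.
  rewrite (_ : p - _ = 0); last lia.
  rewrite (_ : p' - _ = 0); last lia.
  rewrite !muln0 !muln1 !addn0 (count_memPn c_notin).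
  case: (eqVneq c x) => [<-|cx]; first by rewrite (negbTE ac) /=; lia.
  case: (eqVneq a x) => [<-|ax].
    by move=> _ /=; lia.
  by rewrite ?(negbTE cx) ?(negbTE ax) => _ /=; lia.
- by rewrite idx'; lia.
- move=> j; rewrite idx' => Hj; rewrite oth; try (rewrite neq_ltn; apply/orP; left; lia).
  by apply: (Ipre I); rewrite -/p; lia.
- rewrite oth ?(Iq I) //; rewrite neq_ltn; apply/orP; right; rewrite /q; lia.
- move=> j Hj; rewrite oth ?(Isuf I) //; rewrite neq_ltn; apply/orP; right; rewrite /q in Hj *; lia.
move=> s t slt tlt E Hc.
case: (eqVneq s p') => [Es|sp']; first by rewrite nthv' Es eqxx eqxx in Hc.
case: (eqVneq t p') => [Et|tp']; first by rewrite E nthv' Et eqxx eqxx in Hc.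
case: (eqVneq s p) => [Es|sp].
  rewrite nthv' (negbTE sp') Es eqxx oth // in E; last by rewrite neq_ltn; apply/orP; right; lia.
  have := @count_uniq2 v a p' r t ca p'r ltac:(lia) ltac:(rewrite sv /r; lia) ltac:(lia) vp' vr (esym E).
  case => Et; first by rewrite Et eqxx in tp'.
  by rewrite Et Es.
case: (eqVneq t p) => [Et|tp].
  have pne' : p != p' by rewrite eq_sym.
  rewrite oth // Et nthv' (negbTE pne') eqxx in E.
  have := @count_uniq2 v a p' r s ca p'r ltac:(lia) ltac:(rewrite sv /r; lia) ltac:(lia) vp' vr E.
  case => Es; first by rewrite Es eqxx in sp'.
  rewrite /r in Es; rewrite /q in qr; lia.
rewrite !oth // in E Hc.
exact: (Iml I).
Qed.

Lemma iter_inv t : Inv (iter t (alpha_step n k i w) v0) /\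
  (i < size (SC_left n k w (iter t (alpha_step n k i w) v0)) ->
     index c (iter t (alpha_step n k i w) v0) + t <= k).
Proof.
elim: t => [|t [I H]] /=.
  split; [exact: Inv_v0 | rewrite idx_v0; lia].
set v := iter t _ _ in I H *.
case: (ltnP i (size (SC_left n k w v))) => Ha.
  have [I' lt] := step_inv I Ha; split => // _; have := H Ha; lia.
have -> : alpha_step n k i w v = v by rewrite /alpha_step /= ltnNge Ha.
split => // Ha'; lia.
Qed.

Lemma final v : Inv v -> size (SC_left n k w v) <= i -> i <= n - k -> inK k.+1 n.+1 v.
Proof.
move=> I Hs Hi; split.
  split; first by rewrite (Isize I); lia.
  move=> x xv; rewrite (Icount I) count_v0; case: (eqVneq c x) => [<-|cx].
    by rewrite (count_memPn c_notin).
  rewrite ?(negbTE cx) /= muln0 addn0; apply: cw.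
  move: xv; rewrite -has_pred1 has_count (Icount I) count_v0 (negbTE cx) muln0 addn0.
  by rewrite -has_count has_pred1.
move=> s t st; rewrite (Isize I) => tl E.
case: (eqVneq (nth 0 v s) c) => [Ec|Nc]; last by apply: (Iml I) => //; lia.
set p := index c v.
have pk : p <= k := Iidx I.
have Hsz := SC_size I; rewrite -/p in Hsz.
have Hpk : take k w = take p w ++ take (k - p) (drop p w).
  by rewrite -takeD subnKC.
have C1 := count_nonS.
have E1 : count (predC (inS n k w)) (take k w) = count (fun y => ~~ inS n k w y) (take k w) by [].
have E2 : count (predC (inS n k w)) (take k w) = count (predC (inS n k w)) (take p w)
    + count (predC (inS n k w)) (take (k - p) (drop p w)) by rewrite {1}Hpk count_cat.
have E3 := count_predC (inS n k w) (take p w).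
have E4 : size (take p w) = p by rewrite size_takel // sw; lia.
have p2m : p <= 2 * m by rewrite /m; lia.
have cv := Icount I c; rewrite count_v0 (count_memPn c_notin) eqxx in cv.
have vp : nth 0 v p = c by apply: nth_index; apply: c_in.
have pq : p != q by rewrite neq_ltn; apply/orP; left; rewrite /q; lia.
have sv := Isize I.
have Et : nth 0 v t = c by rewrite -E.
have := @count_uniq2 v c p q s cv pq ltac:(lia) ltac:(rewrite sv /q; lia) ltac:(lia) vp (Iq I) Ec.
have := @count_uniq2 v c p q t cv pq ltac:(lia) ltac:(rewrite sv /q; lia) ltac:(lia) vp (Iq I) Et.
rewrite /q /m in p2m *; case => Ht0; case => Hs0; rewrite Ht0 Hs0 in st *; lia.
Qed.

Lemma main : i <= n - k -> inK k.+1 n.+1 (alpha n k i w).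
Proof.
move=> Hi; rewrite /alpha /= -/v0.
have [I H] := iter_inv (size v0).
apply: final => //.
case: (ltnP i (size (SC_left n k w (iter (size v0) (alpha_step n k i w) v0)))) => // Ha.
have := H Ha; rewrite size_v0; lia.
Qed.
End W.

Theorem lemma4 (n k i : nat) (w : seq nat) :
  0 < n -> 0 < k -> k <= n -> 3 * (n - k) <= n -> i <= n - k ->
  inK k n w -> inK k.+1 n.+1 (alpha n k i w).
Proof.
move=> _ Hk Hkn H3 Hi Hw; exact: main.
Qed.
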